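(* As formal power series in $z,y$, $$\sum_{p\ge0}\sum_{n\ge p}\mathbb{B}_n^{(-p)}\frac{z^n}{n!}\frac{y^p}{p!}=\exp\big((y+1)(e^z-1)\big).$$
   Context: For an integer $p\ge0$, the poly-Bell numbers $\mathbb{B}_n^{(-p)}$ ($n\ge0$) are defined by the exponential generating function $\sum_{n\ge0}\mathbb{B}_n^{(-p)}\frac{z^n}{n!}=\sum_{n\ge p}\frac{(e^z-1)^n}{(n-p)!}$. *)

(* Defs.v *)
(* Formal power series over the rationals, as coefficient
   functions; infinite sums of series are taken in the usual (coefficientwise,
   discrete) topology of formal power series. *)
From mathcomp Require Import all_boot all_order all_algebra.
Set Implicit Arguments. Unset Strict Implicit. Unset Printing Implicit Defensive.
Import GRing.Theory.
Local Open Scope ring_scope.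

Definition fps := nat -> rat.
Definition fps_mul (f g : fps) : fps :=
  fun n => \sum_(i < n.+1) f i * g (n - i)%N.
Definition fps_one : fps := fun n => if n == 0%N then 1 else 0.
Definition fps_pow (f : fps) (k : nat) : fps := iter k (fps_mul f) fps_one.
Definition fps_scale (c : rat) (f : fps) : fps := fun n => c * f n.
Definition fps_sum_to (F : nat -> fps) (S : fps) : Prop :=
  forall n, exists N, forall M, (N <= M)%N -> \sum_(k < M) F k n = S n.

Definition expm1 : fps := fun n => if n == 0%N then 0 else (n`!%:R)^-1.

(* EGF of the poly-Bell numbers: sum_{m >= p} (e^z-1)^m/(m-p)!,
   reindexed with m = k + p. *)
Definition polyBell_egf_sum (p : nat) (S : fps) : Prop :=
  fps_sum_to (fun k => fps_scale (k`!%:R)^-1 (fps_pow expm1 (k + p))) S.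

(* B p n stands for the poly-Bell number B_n^{(-p)}:
   sum_n B_n^{(-p)} z^n/n! = sum_{m>=p} (e^z-1)^m/(m-p)! *)
Definition is_polyBell (B : nat -> nat -> rat) : Prop :=
  forall p, polyBell_egf_sum p (fun n => B p n / n`!%:R).

(* f n p = coefficient of z^n y^p *)
Definition fps2 := nat -> nat -> rat.
Definition fps2_mul (f g : fps2) : fps2 :=
  fun n p => \sum_(i < n.+1) \sum_(j < p.+1) f i j * g (n - i)%N (p - j)%N.
Definition fps2_one : fps2 := fun n p => if (n == 0%N) && (p == 0%N) then 1 else 0.
Definition fps2_pow (f : fps2) (k : nat) : fps2 := iter k (fps2_mul f) fps2_one.
Definition fps2_scale (c : rat) (f : fps2) : fps2 := fun n p => c * f n p.
Definition fps2_sum_to (F : nat -> fps2) (S : fps2) : Prop :=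
  forall n p, exists N, forall M, (N <= M)%N -> \sum_(k < M) F k n p = S n p.

Definition y_plus_1 : fps2 := fun n p => if (n == 0%N) && (p <= 1)%N then 1 else 0.
Definition expm1_z : fps2 := fun n p => if p == 0%N then expm1 n else 0.

Definition fps2_exp_is (w S : fps2) : Prop :=
  fps2_sum_to (fun m => fps2_scale (m`!%:R)^-1 (fps2_pow w m)) S.

(* Main.v *)
Require Import Defs.
From mathcomp Require Import all_boot all_order all_algebra.
From mathcomp Require Import zify ring.
Import GRing.Theory Num.Theory.
Local Open Scope ring_scope.

Lemma fps_powS f m : fps_pow f m.+1 = fps_mul f (fps_pow f m).
Proof. by []. Qed.
Lemma fps2_powS f m : fps2_pow f m.+1 = fps2_mul f (fps2_pow f m).
Proof. by []. Qed.

Lemma E_zero m n : (n < m)%N -> fps_pow expm1 m n = 0.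
Proof.
elim: m n => [//|m IH] n Hn.
rewrite fps_powS /fps_mul big1 // => -[i Hi] _ /=.
rewrite /expm1; case: eqP => [->|/eqP i0]; first by rewrite mul0r.
rewrite IH ?mulr0 //; lia.
Qed.

Lemma w_eq i j : fps2_mul y_plus_1 expm1_z i j = if (j <= 1)%N then expm1 i else 0.
Proof.
rewrite /fps2_mul big_ord_recl [X in _ + X]big1 ?addr0; last first.
  by move=> k _; apply: big1 => l _; rewrite /y_plus_1 lift0 /= mul0r.
rewrite big_ord_recr /= big1 ?add0r.
  rewrite /y_plus_1 /expm1_z subnn subn0 /=; case: ifP => _; by rewrite ?mul1r ?mul0r.
move=> [k Hk] _ /=; rewrite /expm1_z subn_eq0 leqNgt Hk /= mulr0 //.
Qed.

Lemma binsum m p : \sum_(j < p.+1) ((if (j <= 1)%N then 1 else 0) * ('C(m, p - j))%:R) = ('C(m.+1, p))%:R :> rat.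
Proof.
case: p => [|p].
  by rewrite big_ord_recl big_ord0 /= !bin0 addr0 mul1r.
rewrite big_ord_recl big_ord_recl big1 ?addr0.
  by rewrite /= subn0 subn1 /= binS natrD !mul1r addrC.
by move=> k _; rewrite !lift0 /= mul0r.
Qed.

Definition w := fps2_mul y_plus_1 expm1_z.

Lemma wpow m n p : fps2_pow w m n p = ('C(m,p))%:R * fps_pow expm1 m n.
Proof.
elim: m n p => [|m IH] n p.
  by rewrite /fps2_pow /fps_pow /= /fps2_one /fps_one; case: n; case: p => //= *; rewrite ?mulr0 ?mul0r ?mul1r.
rewrite fps2_powS fps_powS /fps2_mul /fps_mul mulr_sumr; apply: eq_bigr => i _.
under eq_bigr => j _ do rewrite IH /w w_eq.
rewrite -binsum mulr_suml; apply: eq_bigr => j _.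
by case: ifP => _; rewrite ?mul0r ?mul1r // mulrCA mulrA.
Qed.

Lemma fact_neq0 x : (x`!%:R : rat) != 0.
Proof. by rewrite pnatr_eq0 -lt0n fact_gt0. Qed.

Lemma shift K p n : \sum_(m < K + p) ((m`!%:R)^-1 * (('C(m,p))%:R * fps_pow expm1 m n))
  = (p`!%:R)^-1 * \sum_(k < K) ((k`!%:R)^-1 * fps_pow expm1 (k + p) n) :> rat.
Proof.
rewrite addnC big_split_ord /= big1 ?add0r; last first.
  by move=> [i Hi] _ /=; rewrite bin_small // mul0r mulr0.
rewrite mulr_sumr; apply: eq_bigr => k _ /=.
rewrite [(p + k)%N]addnC.
rewrite -(bin_fact (leq_addl k p)) addnK !natrM.
have := fact_neq0 p; have := fact_neq0 k; have := fact_neq0 (k + p).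
rewrite -[in X in X -> _](bin_fact (leq_addl k p)) addnK !natrM.
move=> h1 h2 h3.
have hC : (('C(k + p, p))%:R : rat) != 0.
  by apply: contra h1 => /eqP ->; rewrite !mul0r.
field; rewrite hC h2 h3 //.
Qed.

Lemma trunc (F : nat -> rat) a M : (forall m, (a <= m)%N -> F m = 0) -> (a <= M)%N ->
  \sum_(m < M) F m = \sum_(m < a) F m.
Proof.
move=> HF; elim: M => [|M IH]; first by rewrite leqn0 => /eqP ->.
rewrite leq_eqVlt => /orP [/eqP -> //|HM].
by rewrite big_ord_recr /= HF // addr0 IH.
Qed.

Theorem mainTheorem12 (B : nat -> nat -> rat) :
  is_polyBell B ->
  fps2_exp_is (fps2_mul y_plus_1 expm1_z)
    (fun n p => if (p <= n)%N then B p n / n`!%:R / p`!%:R else 0).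
Proof.
move=> HB n p; rewrite /fps2_scale /=.
case: (leqP p n) => Hpn.
  have [N0 HN0] := HB p n.
  exists n.+1 => M HM.
  under eq_bigr => m _ do rewrite -/w wpow.
  rewrite (@trunc (fun m : nat => (m`!%:R)^-1 * (('C(m,p))%:R * fps_pow expm1 m n)) n.+1) //; last first.
    by move=> m Hm; rewrite E_zero ?mulr0.
  have := shift (n.+1 - p) p n; rewrite subnK; last by lia.
  move=> ->.
  have := HN0 (maxn N0 (n.+1 - p)) (leq_maxl _ _); rewrite /fps_scale.
  rewrite (@trunc (fun k : nat => (k`!%:R)^-1 * fps_pow expm1 (k + p) n) (n.+1 - p)%N) ?leq_maxr //; last first.
    by move=> k Hk; rewrite E_zero ?mulr0 //; lia.
  by move=> ->; rewrite mulrC.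
exists 0%N => M _.
rewrite big1 // => m _; rewrite -/w wpow.
case: (leqP m n) => Hm.
  by rewrite bin_small ?mul0r ?mulr0 //; lia.
by rewrite E_zero ?mulr0.
Qed.
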